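(* Let $\ell_1,\dots,\ell_T\in\mathbb{R}^{n+1}$ be the observed loss vectors (with $\ell_t\in\partial\varphi_t(w_t)$ for proper losses $\varphi_t$ on $\mathbb{R}^{n+1}$ with $\Delta^n\subseteq\operatorname{dom}\partial\varphi_t$), $\widehat{\ell}_t\in\mathbb{R}^{n+1}$ arbitrary predictions, $a\in\Delta^n$, and $\mathrm{Regret}(u,\dots,u)=\sum_{t=1}^T\varphi_t(w_t)-\sum_{t=1}^T\varphi_t(u)$. For $u\in\Delta^n$: (i) If $\eta_1\geqslant\dots\geqslant\eta_{T+1}>0$ and the learner plays $\widetilde{w}_t=\mathscr{N}\big(a\circ e^{-\eta_t\sum_{i=1}^{t-1}\ell_i}\big)$, $w_t=\mathscr{N}\big(\widetilde{w}_t\circ e^{-\eta_t\widehat{\ell}_t}\big)$, then \[\mathrm{Regret}(u,\dots,u)\leqslant\frac{1}{\eta_{T+1}}\Big\langle u,\ln\frac ua\Big\rangle+\sum_{t=1}^T\frac{1}{\eta_t}Q_2^\star\big(\eta_t\lVert\ell_t-\widehat{\ell}_t\rVert_\infty\big)-\sum_{t=1}^T\frac1{\eta_t}\Big\langle w_t,\ln\frac{w_t}{\widetilde{w}_t}\Big\rangle,\] and also \[\mathrm{Regret}(u,\dots,u)\leqslant\frac{1}{\eta_{T+1}}\Big\langle u,\ln\frac ua\Big\rangle+\sum_{t=1}^T\frac{1}{\eta_t}\Phi_{\eta_t}\big(\ell_t,\widehat{\ell}_t\big)-\sum_{t=1}^T\frac1{\eta_t}\Big\langle v_t,\ln\frac{v_t}{\widetilde{w}_t}\Big\rangle,\quad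 v_t=\mathscr{N}\big(\widetilde{w}_t\circ e^{-\eta_t\widehat{\ell}'_t}\big).\] (ii) If $0<\theta_1\leqslant\dots\leqslant\theta_T$ and the learner plays $\widetilde{w}_1=a$, $\widetilde{w}_t=\mathscr{N}\big(\widetilde{w}_{t-1}\circ e^{-\theta_{t-1}\ell_{t-1}}\big)$, $w_t=\mathscr{N}\big(\widetilde{w}_t\circ e^{-\theta_t\widehat{\ell}_t}\big)$, then \[\mathrm{Regret}(u,\dots,u)\leqslant\frac{1}{\theta_1}\Big\langle u,\ln\frac ua\Big\rangle+\sum_{t=1}^T\frac{1}{\theta_t}Q_2^\star\big(\theta_t\lVert\ell_t-\widehat{\ell}_t\rVert_\infty\big)-\sum_{t=1}^T\frac1{\theta_t}\Big\langle w_t,\ln\frac{w_t}{\widetilde{w}_t}\Big\rangle,\] and also \[\mathrm{Regret}(u,\dots,u)\leqslant\frac{1}{\theta_1}\Big\langle u,\ln\frac ua\Big\rangle+\sum_{t=1}^T\frac{1}{\theta_t}\Phi_{\theta_t}\big(\ell_t,\widehat{\ell}_t\big)-\sum_{t=1}^T\frac1{\theta_t}\Big\langle v_t,\ln\frac{v_t}{\widetilde{w}_t}\Big\rangle,\quad v_t=\mathscr{N}\big(\widetilde{w}_t\circ e^{-\theta_t\widehat{\ell}'_t}\big).\]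
   Context: $\Delta^n=\{w\in\mathbb{R}^{n+1}:w\geqslant0,\sum_iw_i=1\}$; $\circ$ is the entrywise product, exponentials/logarithms/ratios are entrywise; $\mathscr{N}(v)=v/\sum_iv_i$; $\langle u,\ln\frac ua\rangle=\sum_iu_i\ln\frac{u_i}{a_i}$ with $0\ln(0/\cdot)=0$ (and $+\infty$ if $u_i>0=a_i$). $Q_\rho^\star(\varkappa)=\frac12\varkappa^2-\frac12(\lvert\varkappa\rvert-\rho)_+^2$ with $x_+=\max\{x,0\}$. $\widehat{\ell}'_t=\lambda\widehat{\ell}_t+(1-\lambda)\ell_t$ with $\lambda=\min\{\lVert\ell_t\rVert_\infty/\lVert\ell_t-\widehat{\ell}_t\rVert_\infty,1\}$ (any $\lambda$ if $\ell_t=\widehat{\ell}_t$). For $\xi>0$ and $\rho=2$, $\Phi_\xi(x^*,\widehat{x}^* )=Q_\rho^\star\big(\xi\min\{\lVert x^*-\widehat{x}^*\rVert_\infty,\lVert x^*\rVert_\infty\}\big)+\xi\lVert x^*\rVert_\infty\min\{\xi(\lVert x^*-\widehat{x}^*\rVert_\infty-\lVert x^*\rVert_\infty)_+,\rho\}$. Subdifferential of a proper function: usual convex-analysis subdifferential. *)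

(* Defs.v *)
From HB Require Import structures.
From mathcomp Require Import all_boot all_order all_algebra.
From mathcomp Require Import all_classical all_reals all_analysis.
Set Implicit Arguments. Unset Strict Implicit. Unset Printing Implicit Defensive.
Import Order.TTheory GRing.Theory Num.Theory.
Local Open Scope ring_scope.

Section Defs.
Variable R : realType.
Variable n : nat.

Definition vec := 'I_n.+1 -> R.

Definition simplex (w : vec) : Prop := (forall i, 0 <= w i) /\ \sum_i w i = 1.

Definition normalize (v : vec) : vec := fun i => v i / \sum_j v j.

Definition dotv (x y : vec) : R := \sum_i x i * y i.

Definition vsub (x y : vec) : vec := fun i => x i - y i.

Definition supnorm (v : vec) : R := \big[Num.max/0]_i `|v i|.

(* <u, ln (u/a)> with 0 ln (0/.) = 0 and +oo if u_i > 0 = a_i *)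
Definition kl (u a : vec) : \bar R :=
  (\sum_i (if u i == 0%R then 0%E
           else if a i == 0%R then +oo%E
           else ((u i * ln (u i / a i))%R)%:E))%E.

Definition Qstar (rho k : R) : R :=
  k ^+ 2 / 2 - (Num.max (`|k| - rho) 0) ^+ 2 / 2.

Definition Phix (xi : R) (x xh : vec) : R :=
  Qstar 2 (xi * Num.min (supnorm (vsub x xh)) (supnorm x))
  + xi * supnorm x *
    Num.min (xi * Num.max (supnorm (vsub x xh) - supnorm x) 0) 2.

(* lhat'_t = lambda lhat_t + (1 - lambda) l_t,
   lambda = min(||l||/||l - lhat||, 1)  (when l = lhat, any lambda gives l) *)
Definition lhat' (l lh : vec) : vec :=
  let lam := Num.min (supnorm l / supnorm (vsub l lh)) 1 in
  fun i => lam * lh i + (1 - lam) * l i.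

Definition proper_fun (f : vec -> \bar R) : Prop :=
  (forall x, f x != -oo%E) /\ exists x, f x != +oo%E.

Definition subgrad (f : vec -> \bar R) (w g : vec) : Prop :=
  f w \is a fin_num /\
  forall x, (f w + (dotv g (vsub x w))%:E <= f x)%E.

Definition expstep (wt : vec) (eta : R) (v : vec) : vec :=
  normalize (fun i => wt i * expR (- (eta * v i))).

Definition ftrl_tilde (a : vec) (eta : nat -> R) (l : nat -> vec) (t : nat) : vec :=
  normalize (fun i => a i * expR (- (eta t * \sum_(1 <= s < t) l s i))).

Fixpoint omd_tilde (a : vec) (theta : nat -> R) (l : nat -> vec) (t : nat) : vec :=
  match t with
  | 0 => a
  | s.+1 => if s == 0%N then a else expstep (omd_tilde a theta l s) (theta s) (l s)
  end.

Definition regret (T : nat) (phi : nat -> vec -> \bar R) (w : nat -> vec) (u : vec)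
  : \bar R :=
  (\sum_(1 <= t < T.+1) phi t (w t) - \sum_(1 <= t < T.+1) phi t u)%E.

End Defs.

(* Main.v *)
Require Import Defs.
From HB Require Import structures.
From mathcomp Require Import all_boot all_order all_algebra.
From mathcomp Require Import all_classical all_reals all_analysis.
From mathcomp Require Import ring lra.
Import Order.TTheory GRing.Theory Num.Theory numFieldNormedType.Exports.
Local Open Scope ring_scope.

Section Calc.
Variable R : realType.

Lemma isdV (f : R -> R) (y df : R) : f y != 0 -> is_derive y 1 f df ->
  is_derive y 1 (fun z : R => (f z)^-1) (- (f y)^-2 * df).
Proof.
move=> yn0 hf.
have d : derivable f y 1 by apply: ex_derive.
have dV := derivableV yn0 d.
apply: is_derive_eq (derivableP dV) _.
by rewrite deriveV // derive_val.
Qed.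
Definition gg (y : R) : R := ln y + 4^-1 * y^-1 + (27/4) * (y + 2)^-1.

Lemma gg_derive {y : R} : 0 < y ->
  is_derive y 1 (gg) (y^-1 - 4^-1 * y^-2 - (27/4) * (y+2)^-2).
Proof.
move=> y0.
have H1 : is_derive y 1 (@ln R) y^-1 by exact: is_derive1_ln.
have H2 : is_derive y 1 (fun z : R => z^-1) (- y^-2 * 1).
  apply: (@isdV id); rewrite /= ?gt_eqF //.
have H3 : is_derive y 1 (fun z : R => (z + 2)^-1) (- (y+2)^-2 * 1).
  apply: (@isdV (fun z => z + 2)); first by rewrite gt_eqF // addr_gt0.
  exact: is_derive_shift.
have H := is_deriveD (is_deriveD H1 (is_deriveZ (4^-1) H2)) (is_deriveZ (27/4) H3).
have -> : gg = (@ln R + (4^-1 : R) *: (fun z : R => z^-1)) + (27/4 : R) *: (fun z : R => (z + 2)^-1).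
  by apply/funext => z.
apply: is_derive_eq H _.
by rewrite !mulr1 !scalerN; congr (_ - _ - _).
Qed.

Lemma gg'_eq (z : R) : 0 < z ->
  z^-1 - 4^-1 * z^-2 - (27/4) * (z+2)^-2 = (z - 1)^+3 / (z^+2 * (z + 2)^+2).
Proof.
move=> z0.
have zn : z != 0 by rewrite gt_eqF.
have z2n : z + 2 != 0 by rewrite gt_eqF // addr_gt0.
by field; rewrite zn z2n.
Qed.

Lemma gg_cont {z : R} : 0 < z -> {for z, continuous (gg)}.
Proof.
move=> z0; apply: differentiable_continuous; apply/derivable1_diffP.
have HH := gg_derive z0; exact: ex_derive.
Qed.

Lemma gg_min {x : R} : 0 < x -> gg 1 <= gg x.
Proof.
move=> x0.
have D (z : R) : 0 < z -> derive1 gg z = (z - 1)^+3 / (z^+2 * (z + 2)^+2).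
  by move=> z0; have HH := gg_derive z0; rewrite derive1E derive_val gg'_eq.
case: (lerP 1 x) => x1.
- apply: (@ger0_derive1_ndecr R (gg) 1 x) => //.
  + move=> z; rewrite in_itv /= => /andP[z1 _].
    have HH := gg_derive (lt_trans ltr01 z1); exact: ex_derive.
  + move=> z; rewrite in_itv /= => /andP[z1 _].
    rewrite D; last exact: lt_trans ltr01 z1.
    by apply: divr_ge0; [apply: exprn_ge0; rewrite subr_ge0 ltW | apply: mulr_ge0; apply: sqr_ge0].
  + apply: continuous_in_subspaceT => z; rewrite inE /= in_itv /= => /andP[z1 _].
    exact: gg_cont (lt_le_trans ltr01 z1).
- apply: (@ler0_derive1_nincr R (gg) x 1) => //; last exact: ltW.
  + move=> z; rewrite in_itv /= => /andP[xz _].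
    have HH := gg_derive (lt_trans x0 xz); exact: ex_derive.
  + move=> z; rewrite in_itv /= => /andP[xz z1].
    rewrite D; last exact: lt_trans x0 xz.
    apply: mulr_le0_ge0; last by rewrite invr_ge0 mulr_ge0 // sqr_ge0.
    have : z - 1 <= 0 by rewrite subr_le0 ltW.
    move=> h; rewrite exprS; apply: mulr_le0_ge0 => //; exact: sqr_ge0.
  + apply: continuous_in_subspaceT => z; rewrite inE /= in_itv /= => /andP[xz _].
    exact: gg_cont (lt_le_trans x0 xz).
Qed.

Lemma ln_lb (x : R) : 0 < x ->
  x - 1 + 3 * (x - 1)^+2 / (2 * (x + 2)) <= x * ln x.
Proof.
move=> x0.
have := gg_min x0; rewrite /gg ln1 add0r invr1 mulr1.
have xn : x != 0 by rewrite gt_eqF.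
have x2 : 0 < x + 2 by rewrite addr_gt0.
move=> h.
have h' : 5/2 - 4^-1 * x^-1 - 27/4 * (x + 2)^-1 <= ln x.
  move: h; set A := 4^-1 * x^-1; set B := 27/4 * (x+2)^-1.
  have -> : 4^-1 + 27/4 * (1 + 2)^-1 = 5/2 :> R by field.
  lra.
have e : x * (5/2 - 4^-1 * x^-1 - 27/4 * (x + 2)^-1) = x - 1 + 3 * (x - 1)^+2 / (2 * (x + 2)).
  by field; rewrite xn gt_eqF.
by rewrite -e ler_pM2l.
Qed.

End Calc.

Set Implicit Arguments. Unset Strict Implicit.

Section Main.
Variable R : realType.
Variable n : nat.
Local Notation vec := (vec R n).

Definition klr (q p : vec) : R := \sum_i q i * ln (q i / p i).
Definition sub (q p : vec) : Prop := forall i, q i != 0 -> p i != 0.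
Definition l1 (x y : vec) : R := \sum_i `|x i - y i|.
Definition Zs (p : vec) (eta : R) (x : vec) : R := \sum_i p i * expR (- (eta * x i)).

Lemma simplex_ge0 {p : vec} : simplex p -> forall i, 0 <= p i.
Proof. by case. Qed.

Lemma simplex_ex {p : vec} : simplex p -> exists i, 0 < p i.
Proof.
move=> [p0 p1]; case: (pselect (exists i, 0 < p i)) => // hn; exfalso.
have : \sum_i p i <= \sum_(i : 'I_n.+1) (0 : R).
  apply: ler_sum => i _; rewrite leNgt; apply/negP => h; apply: hn; by exists i.
by rewrite p1 big1 // ler10.
Qed.

Lemma Zs_gt0 {p : vec} eta x : simplex p -> 0 < Zs p eta x.
Proof.
move=> sp; have [i pi] := simplex_ex sp.
rewrite /Zs (bigD1 i) //=.
have h1 : 0 < p i * expR (- (eta * x i)) by rewrite mulr_gt0 // expR_gt0.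
have h2 : 0 <= \sum_(j < n.+1 | j != i) p j * expR (- (eta * x j)).
  by apply: sumr_ge0 => j _; rewrite mulr_ge0 ?expR_ge0 // (simplex_ge0 sp).
lra.
Qed.

Lemma expstepE (p : vec) eta x i :
  expstep p eta x i = p i * expR (- (eta * x i)) / Zs p eta x.
Proof. by []. Qed.

Lemma expstep_simplex (p : vec) eta x : simplex p -> simplex (expstep p eta x).
Proof.
move=> sp; have Z0 := Zs_gt0 eta x sp; split.
  move=> i; rewrite expstepE divr_ge0 ?(ltW Z0) // mulr_ge0 ?expR_ge0 //.
  exact: simplex_ge0 sp i.
rewrite /expstep /normalize -mulr_suml -/(Zs p eta x) divff //.
by rewrite gt_eqF.
Qed.

Lemma expstep_nz (p : vec) eta x i : simplex p ->
  (expstep p eta x i != 0) = (p i != 0).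
Proof.
move=> sp; have Z0 := Zs_gt0 eta x sp.
rewrite expstepE !mulf_eq0 invr_eq0 (gt_eqF Z0) orbF.
by rewrite (gt_eqF (expR_gt0 _)) orbF.
Qed.

Lemma sub_expstep (q p : vec) eta x : simplex p -> sub q p -> sub q (expstep p eta x).
Proof. by move=> sp sq i /sq; rewrite expstep_nz. Qed.

Lemma sub_expstep' (p : vec) eta x : simplex p -> sub (expstep p eta x) p.
Proof. by move=> sp i; rewrite expstep_nz. Qed.

Lemma sub_trans (a b c : vec) : sub a b -> sub b c -> sub a c.
Proof. by move=> h1 h2 i /h1 /h2. Qed.

Lemma sub_refl (a : vec) : sub a a.
Proof. by []. Qed.

Lemma klr_self (q : vec) : klr q q = 0.
Proof.
apply: big1 => i _; have [->|q0] := eqVneq (q i) 0; first by rewrite mul0r.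
by rewrite divff // ln1 mulr0.
Qed.

Lemma gibbs (q p : vec) eta x : simplex p -> simplex q -> sub q p ->
  klr q (expstep p eta x) = klr q p + eta * dotv q x + ln (Zs p eta x).
Proof.
move=> sp sq sqp; have Z0 := Zs_gt0 eta x sp.
have e : forall i, q i * ln (q i / expstep p eta x i) =
    q i * ln (q i / p i) + eta * (q i * x i) + q i * ln (Zs p eta x).
  move=> i; have [->|q0] := eqVneq (q i) 0; first by rewrite !mul0r mulr0 !addr0.
  have qp : 0 < q i by rewrite lt_neqAle eq_sym q0 (simplex_ge0 sq).
  have pp : 0 < p i by rewrite lt_neqAle eq_sym (sqp _ q0) (simplex_ge0 sp).
  have -> : q i / expstep p eta x i = (q i / p i) * (expR (eta * x i) * Zs p eta x).
    rewrite expstepE expRN; field.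
    by rewrite (gt_eqF Z0) (gt_eqF pp) (gt_eqF (expR_gt0 _)).
  rewrite [ln (_ / _ * _)]lnM ?posrE ?divr_gt0 ?mulr_gt0 ?expR_gt0 //.
  rewrite [ln (expR _ * _)]lnM ?posrE ?expR_gt0 // expRK; ring.
rewrite /klr (eq_bigr _ (fun i _ => e i)) !big_split /=.
rewrite -mulr_sumr -mulr_suml (proj2 sq) mul1r.
by [].
Qed.

End Main.


Section Pinsker.
Variable R : realType.
Variable n : nat.
Local Notation vec := (vec R n).

Lemma pinsker_term (q p : R) : 0 <= q -> 0 <= p -> (p = 0 -> q = 0) ->
  3 * (q - p)^+2 / (2 * (q + 2 * p)) <= q * ln (q / p) - q + p.
Proof.
move=> q0 p0 pq.
have [pe|pn] := eqVneq p 0.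
  by rewrite pe (pq pe) !(subr0, mul0r, addr0, expr0n, mulr0, invr0, mul0r).
have pp : 0 < p by rewrite lt_neqAle eq_sym pn.
have [qe|qn] := eqVneq q 0.
  rewrite qe !(mul0r, sub0r, add0r, subr0) sqrrN.
  have -> : 3 * p ^+ 2 / (2 * (2 * p)) = 3/4 * p by field.
  lra.
have qp : 0 < q by rewrite lt_neqAle eq_sym qn.
have x0 : 0 < q / p by rewrite divr_gt0.
have := @ln_lb R (q / p) x0 => h.
have := ler_wpM2l (ltW pp) h.
have -> : p * (q / p * ln (q / p)) = q * ln (q / p) by field.
have -> : p * (q / p - 1 + 3 * (q / p - 1) ^+ 2 / (2 * (q / p + 2)))
   = q - p + 3 * (q - p)^+2 / (2 * (q + 2 * p)).
  have h1 : q + 2 * p != 0 by rewrite gt_eqF // addr_gt0 // mulr_gt0.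
  have h2 : q / p + 2 != 0 by rewrite gt_eqF // addr_gt0.
  by field; rewrite h1 pn.
lra.
Qed.

Lemma cs_ineq (c d : 'I_n.+1 -> R) :
  (forall i, 0 <= c i) -> (forall i, 0 <= d i) -> (forall i, d i = 0 -> c i = 0) ->
  (\sum_i c i) ^+ 2 <= (\sum_i c i ^+ 2 / d i) * (\sum_i d i).
Proof.
move=> c0 d0 dc.
set C := \sum_i c i; set A := \sum_i c i ^+ 2 / d i; set D := \sum_i d i.
have A0 : 0 <= A by apply: sumr_ge0 => i _; rewrite divr_ge0 // sqr_ge0.
have D0 : 0 <= D by apply: sumr_ge0.
have C0 : 0 <= C by apply: sumr_ge0.
have [Ce|Cn] := eqVneq C 0.
  by rewrite Ce expr0n /= mulr_ge0.
have Cp : 0 < C by rewrite lt_neqAle eq_sym Cn.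
have [i ci] : exists i, 0 < c i.
  case: (pselect (exists i, 0 < c i)) => // hn; exfalso.
  have : C <= \sum_(i : 'I_n.+1) (0 : R).
    apply: ler_sum => i _; rewrite leNgt; apply/negP => h; apply: hn; by exists i.
  by rewrite big1 // leNgt Cp.
have di : 0 < d i.
  rewrite lt_neqAle d0 andbT; apply/eqP => h.
  by move: ci; rewrite (dc i (esym h)) ltxx.
have Dp : 0 < D.
  rewrite /D (bigD1 i) //=.
  have : 0 <= \sum_(j < n.+1 | j != i) d j by apply: sumr_ge0.
  lra.
set lam := D / C.
have lp : 0 < lam by rewrite divr_gt0.
have term j : 2 * c j <= lam * (c j ^+ 2 / d j) + d j / lam.
  have [dj|dj] := eqVneq (d j) 0.
    by rewrite dj (dc j dj) expr0n /= !(mul0r, mulr0, invr0, addr0).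
  have djp : 0 < d j by rewrite lt_neqAle eq_sym dj d0.
  have e : lam * (c j ^+ 2 / d j) + d j / lam - 2 * c j = (lam * c j - d j)^+2 / (lam * d j).
    by field; rewrite dj (gt_eqF lp).
  have : 0 <= (lam * c j - d j)^+2 / (lam * d j) by rewrite divr_ge0 ?sqr_ge0 // mulr_ge0 // ltW.
  rewrite -e; lra.
have hs : 2 * C <= lam * A + D / lam.
  have -> : lam * A + D / lam = \sum_j (lam * (c j ^+ 2 / d j) + d j / lam).
    by rewrite big_split /= -mulr_sumr -mulr_suml.
  rewrite /C mulr_sumr.
  by apply: ler_sum => j _; exact: term j.
have e2 : lam * A + D / lam = (A * D) / C + C by rewrite /lam; field; rewrite Cn (gt_eqF Dp).
rewrite e2 in hs.
have h3 : C <= A * D / C by lra.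
have := ler_wpM2l C0 h3.
have -> : C * (A * D / C) = A * D by field.
by rewrite expr2.
Qed.

Lemma pinsker (q p : vec) : simplex p -> simplex q -> sub q p ->
  l1 q p ^+ 2 / 2 <= klr q p.
Proof.
move=> sp sq sqp.
have q0 := simplex_ge0 sq; have p0 := simplex_ge0 sp.
have pq : forall i, p i = 0 -> q i = 0.
  move=> i pi; apply/eqP; apply/negP => /negP hq; by have := sqp i hq; rewrite pi eqxx.
have e : klr q p = \sum_i (q i * ln (q i / p i) - q i + p i).
  rewrite !big_split /= sumrN (proj2 sq) (proj2 sp) /klr; lra.
have h1 : \sum_i 3 * (q i - p i)^+2 / (2 * (q i + 2 * p i)) <= klr q p.
  rewrite e; apply: ler_sum => i _; exact: pinsker_term (q0 i) (p0 i) (pq i).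
have h2 := @cs_ineq (fun i => `|q i - p i|) (fun i => q i + 2 * p i).
have h2' : l1 q p ^+ 2 <= (\sum_i `|q i - p i| ^+ 2 / (q i + 2 * p i)) * 3.
  have <- : \sum_i (q i + 2 * p i) = 3.
    by rewrite big_split /= -mulr_sumr (proj2 sq) (proj2 sp); lra.
  apply: h2 => i //.
  - by rewrite addr_ge0 // mulr_ge0.
  - move=> h; have : q i = 0 /\ p i = 0.
      have := q0 i; have := p0 i; move: h; lra.
    by case=> -> ->; rewrite subr0 normr0.
have e3 : \sum_i 3 * (q i - p i)^+2 / (2 * (q i + 2 * p i))
    = 3 / 2 * \sum_i `|q i - p i| ^+ 2 / (q i + 2 * p i).
  rewrite mulr_sumr; apply: eq_bigr => i _; rewrite real_normK ?num_real //.
  by rewrite invfM; ring.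
lra.
Qed.

Lemma klr_ge0 (q p : vec) : simplex p -> simplex q -> sub q p -> 0 <= klr q p.
Proof.
move=> sp sq sqp; apply: le_trans (pinsker sp sq sqp).
by rewrite divr_ge0 // sqr_ge0.
Qed.

End Pinsker.


Section Stab.
Variable R : realType.
Variable n : nat.
Local Notation vec := (vec R n).

Lemma supnorm_ge0 (v : vec) : 0 <= supnorm v.
Proof.
apply: (big_ind (fun x => 0 <= x)) => //= x y hx hy.
by rewrite le_max hx.
Qed.

Lemma le_supnorm (v : vec) i : `|v i| <= supnorm v.
Proof. by rewrite /supnorm (bigD1 i) //= le_max lexx. Qed.

Lemma supnorm_le (v : vec) B : 0 <= B -> (forall i, `|v i| <= B) -> supnorm v <= B.
Proof.
move=> B0 hv; apply: (big_ind (fun x => x <= B)) => //=.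
by move=> x y hx hy; rewrite ge_max hx.
Qed.

Lemma supnormZ (c : R) (v : vec) : supnorm (fun i => c * v i) = `|c| * supnorm v.
Proof.
apply/eqP; rewrite eq_le; apply/andP; split.
  apply: supnorm_le; first by rewrite mulr_ge0 ?supnorm_ge0.
  by move=> i; rewrite normrM ler_wpM2l // le_supnorm.
have [->|c0] := eqVneq c 0; first by rewrite normr0 mul0r supnorm_ge0.
have cp : 0 < `|c| by rewrite normr_gt0.
have h : supnorm v <= supnorm (fun i => c * v i) / `|c|.
  apply: supnorm_le; first by rewrite divr_ge0 ?supnorm_ge0 // ltW.
  move=> i; have := le_supnorm (fun i => c * v i) i; rewrite /= normrM => h.
  rewrite ler_pdivlMr //; by rewrite mulrC.
by rewrite mulrC -ler_pdivlMr.
Qed.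

Lemma supnorm_sym (x y : vec) : supnorm (vsub x y) = supnorm (vsub y x).
Proof. by apply: eq_bigr => i _; rewrite /vsub distrC. Qed.

Lemma dotvC (a b : vec) : dotv a b = dotv b a.
Proof. by apply: eq_bigr => i _; rewrite mulrC. Qed.

Lemma holder (a b : vec) : dotv a b <= (\sum_i `|a i|) * supnorm b.
Proof.
rewrite /dotv mulr_suml; apply: ler_sum => i _.
apply: le_trans (ler_norm _) _; rewrite normrM ler_wpM2l //.
exact: le_supnorm.
Qed.

Lemma dotv_sub4 (a b c d : vec) :
  dotv (vsub a b) (vsub c d) = dotv a c - dotv a d - dotv b c + dotv b d.
Proof.
rewrite /dotv -!sumrB -big_split /=; apply: eq_bigr => i _; rewrite /vsub; ring.
Qed.

Lemma dotv_subr (a c d : vec) : dotv a (vsub c d) = dotv a c - dotv a d.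
Proof. by rewrite /dotv -sumrB; apply: eq_bigr => i _; rewrite /vsub; ring. Qed.

Lemma l1C (a b : vec) : l1 a b = l1 b a.
Proof. by apply: eq_bigr => i _; rewrite distrC. Qed.

Lemma l1_ge0 (a b : vec) : 0 <= l1 a b.
Proof. by apply: sumr_ge0. Qed.

Lemma l1_le2 (a b : vec) : simplex a -> simplex b -> l1 a b <= 2.
Proof.
move=> sa sb; apply: le_trans (_ : \sum_i (a i + b i) <= 2).
  apply: ler_sum => i _; apply: le_trans (ler_normB _ _) _.
  by rewrite !ger0_norm // (simplex_ge0 sa, simplex_ge0 sb).
by rewrite big_split /= (proj2 sa) (proj2 sb).
Qed.

Lemma sym_id (p x y : vec) eta : simplex p ->
  klr (expstep p eta y) (expstep p eta x) + klr (expstep p eta x) (expstep p eta y)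
  = eta * dotv (vsub (expstep p eta y) (expstep p eta x)) (vsub x y).
Proof.
move=> sp.
set w := expstep p eta y; set q := expstep p eta x.
have sw : simplex w by exact: expstep_simplex.
have sq : simplex q by exact: expstep_simplex.
have G1 := gibbs eta x sp sw (sub_expstep' sp).
have G2 := gibbs eta y sp sw (sub_expstep' sp).
have G3 := gibbs eta y sp sq (sub_expstep' sp).
have G4 := gibbs eta x sp sq (sub_expstep' sp).
rewrite -/w -/q klr_self in G1 G2 G3 G4.
rewrite G1 G3 dotv_sub4 !mulrDr !mulrN.
rewrite klr_self in G4; lra.
Qed.

Lemma qstar_ge (k r : R) : 0 <= k -> 0 <= r <= 2 -> k * r - r ^+ 2 / 2 <= Qstar 2 k.
Proof.
move=> k0 /andP[r0 r2]; rewrite /Qstar ger0_norm //.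
case/orP: (le_total k 2) => k2.
  rewrite max_r ?subr_le0 // expr0n /= mul0r subr0 !expr2.
  have : 0 <= (k - r) * (k - r) by rewrite -expr2 sqr_ge0.
  nra.
rewrite max_l; last by rewrite subr_ge0.
rewrite !expr2.
have : 0 <= (2 - r) * (k - 2) by rewrite mulr_ge0 // subr_ge0 //.
have : 0 <= (2 - r) * (2 - r) by rewrite -expr2 sqr_ge0.
nra.
Qed.

Lemma stab1 (p x y : vec) eta : simplex p -> 0 < eta ->
  eta * dotv x (expstep p eta y) + ln (Zs p eta x)
  <= Qstar 2 (eta * supnorm (vsub x y)) - klr (expstep p eta y) p.
Proof.
move=> sp e0.
set w := expstep p eta y; set q := expstep p eta x.
have sw : simplex w by exact: expstep_simplex.
have sq : simplex q by exact: expstep_simplex.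
have G1 := gibbs eta x sp sw (sub_expstep' sp).
rewrite -/w -/q in G1.
have S := sym_id x y eta sp; rewrite -/w -/q in S.
have P := pinsker sw sq (sub_expstep eta y sp (sub_expstep' sp)).
rewrite -/w -/q in P.
have H := holder (vsub w q) (vsub x y).
have r0 := l1_ge0 w q; have r2 := l1_le2 sw sq.
have s0 := supnorm_ge0 (vsub x y).
have Qb := qstar_ge (mulr_ge0 (ltW e0) s0) (introT andP (conj r0 r2)).
change (\sum_i `|vsub w q i|) with (l1 w q) in H.
rewrite l1C in P.
have H' : eta * dotv (vsub w q) (vsub x y) <= eta * (l1 w q * supnorm (vsub x y)).
  by rewrite ler_wpM2l // ltW.
have e1 : eta * supnorm (vsub x y) * l1 w q = eta * (l1 w q * supnorm (vsub x y)) by ring.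
rewrite e1 in Qb; rewrite dotvC.
lra.
Qed.

Lemma lipschitz (p y y' : vec) eta : simplex p -> 0 < eta ->
  l1 (expstep p eta y) (expstep p eta y') <= eta * supnorm (vsub y y').
Proof.
move=> sp e0.
set w := expstep p eta y; set v := expstep p eta y'.
have sw : simplex w by exact: expstep_simplex.
have sv : simplex v by exact: expstep_simplex.
have S := sym_id y' y eta sp; rewrite -/w -/v in S.
have P1 := pinsker sw sv (sub_expstep eta y sp (sub_expstep' sp)).
have P2 := pinsker sv sw (sub_expstep eta y' sp (sub_expstep' sp)).
rewrite -/w -/v l1C in P1.
have H := holder (vsub w v) (vsub y' y).
change (\sum_i `|vsub w v i|) with (l1 w v) in H.
rewrite supnorm_sym in H.
have H' : eta * dotv (vsub w v) (vsub y' y) <= eta * (l1 w v * supnorm (vsub y y')).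
  by rewrite ler_wpM2l // ltW.
have r0 := l1_ge0 w v; have s0 := supnorm_ge0 (vsub y y').
set r := l1 w v in P1 P2 H H' r0 *.
set s := supnorm (vsub y y') in H H' s0 *.
have h : r * r <= (eta * s) * r.
  have : r ^+ 2 / 2 + r ^+ 2 / 2 <= eta * (r * s) by lra.
  by rewrite !expr2; move=> h; apply: le_trans _ (le_trans h _); [lra| rewrite mulrA mulrAC].
have [r00|rp] := eqVneq r 0; first by rewrite r00 mulr_ge0 // ltW.
have rp' : 0 < r by rewrite lt_neqAle eq_sym rp r0.
by rewrite -(ler_pM2r rp').
Qed.


Lemma lam_facts (s m lam : R) : 0 <= s -> 0 <= m -> lam = Num.min (m / s) 1 ->
  [/\ 0 <= lam, lam <= 1, lam * s = Num.min s m & (1 - lam) * s = Num.max (s - m) 0].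
Proof.
move=> s0 m0 ->; set lm := Num.min (m / s) 1.
have l0 : 0 <= lm by rewrite /lm le_min ler01 andbT divr_ge0.
have l1' : lm <= 1 by rewrite /lm ge_min lexx orbT.
have F1 : lm * s = Num.min s m.
  have [se|sn] := eqVneq s 0.
    rewrite se mulr0 min_l //.
  have sp : 0 < s by rewrite lt_neqAle eq_sym sn s0.
  case/orP: (le_total m s) => ms.
    rewrite /lm min_l; last by rewrite ler_pdivrMr // mul1r.
    by rewrite min_r // divfK.
  rewrite /lm min_r; last by rewrite ler_pdivlMr // mul1r.
  by rewrite min_l // mul1r.
split => //.
rewrite mulrBl mul1r F1.
case/orP: (le_total m s) => ms.
  by rewrite min_r // max_l // subr_ge0.
by rewrite min_l // subrr max_r // subr_le0.
Qed.

Lemma stab2 (p x y : vec) eta : simplex p -> 0 < eta ->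
  eta * dotv x (expstep p eta y) + ln (Zs p eta x)
  <= Phix eta x y - klr (expstep p eta (lhat' x y)) p.
Proof.
move=> sp e0.
set y' := lhat' x y.
set w := expstep p eta y; set v := expstep p eta y'.
have sw : simplex w by exact: expstep_simplex.
have sv : simplex v by exact: expstep_simplex.
have S1 := stab1 x y' sp e0; rewrite -/v in S1.
have L := lipschitz y y' sp e0; rewrite -/w -/v in L.
have L2 := l1_le2 sw sv.
have H := holder (vsub w v) x.
change (\sum_i `|vsub w v i|) with (l1 w v) in H.
set s := supnorm (vsub x y).
set m := supnorm x.
set lam := Num.min (m / s) 1.
have [l0 l1' F1 F2] := lam_facts (supnorm_ge0 (vsub x y)) (supnorm_ge0 x) (erefl lam).
have E1 : vsub x y' = fun i => lam * vsub x y i.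
  by apply/funext => i; rewrite /y' /lhat' /vsub -/s -/m -/lam; ring.
have E2 : vsub y y' = fun i => (1 - lam) * vsub y x i.
  by apply/funext => i; rewrite /y' /lhat' /vsub -/s -/m -/lam; ring.
rewrite E1 supnormZ ger0_norm // F1 in S1.
rewrite E2 supnormZ ger0_norm ?subr_ge0 // -supnorm_sym -/s F2 in L.
have m0 : 0 <= m := supnorm_ge0 _.
have r0 := l1_ge0 w v.
have Hm : eta * m * l1 w v <= eta * m * Num.min (eta * Num.max (s - m) 0) 2.
  apply: ler_wpM2l; first by rewrite mulr_ge0 // ltW.
  by rewrite le_min L L2.
have Hd : eta * dotv x w = eta * dotv x v + eta * dotv (vsub w v) x.
  have e : dotv (vsub w v) x = dotv w x - dotv v x.
    by rewrite /dotv -sumrB; apply: eq_bigr => i _; rewrite /vsub; ring.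
  by rewrite e (dotvC x w) (dotvC x v); ring.
have H' : eta * dotv (vsub w v) x <= eta * (l1 w v * m) by rewrite ler_wpM2l // ltW.
rewrite /Phix -/s -/m Hd.
have e2 : eta * (l1 w v * m) = eta * m * l1 w v by ring.
rewrite e2 in H'.
lra.
Qed.

End Stab.


Section Decomp.
Variable R : realType.
Variable n : nat.
Local Notation vec := (vec R n).

Lemma conv (eta A B C : R) : 0 < eta -> eta * A + B <= C -> A + B / eta <= eta^-1 * C.
Proof.
move=> e0 h.
have -> : A + B / eta = eta^-1 * (eta * A + B) by field; rewrite gt_eqF.
by rewrite ler_wpM2l // invr_ge0 ltW.
Qed.

Lemma tele (T : nat) (c K : nat -> R) :
  (forall t, (1 <= t < T)%N -> c t.+1 <= c t) ->
  (forall t, (1 <= t <= T)%N -> 0 <= c t) -> 0 <= c 1%N ->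
  (forall t, 0 <= K t) ->
  - (c 1%N * K 1%N) <= \sum_(1 <= t < T.+1) c t * (K t.+1 - K t).
Proof.
move=> cm c0 c10 K0.
have main : forall T', (T' <= T)%N -> (1 <= T')%N ->
    c T' * K T'.+1 - c 1%N * K 1%N <= \sum_(1 <= t < T'.+1) c t * (K t.+1 - K t).
  elim=> [//|T' IH] hT _.
  case: T' IH hT => [|T'] IH hT.
    by rewrite big_nat1; lra.
  rewrite big_nat_recr //=.
  have IH' := IH (ltnW hT) isT.
  have hc : c T'.+2 <= c T'.+1 by apply: cm; rewrite /= hT.
  have hk := K0 T'.+2.
  have : c T'.+2 * K T'.+2 <= c T'.+1 * K T'.+2 by rewrite ler_wpM2r.
  move: IH'; set S := \sum_(1 <= t < T'.+2) _.
  rewrite mulrBr; lra.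
case: T cm c0 main => [|T] cm c0 main.
  rewrite big_geq //; have := mulr_ge0 c10 (K0 1%N); lra.
have := main T.+1 (leqnn _) isT.
have := mulr_ge0 (c0 T.+1 (leqnn _)) (K0 T.+2).
lra.
Qed.

Lemma omd_succ (a : vec) th l t : (1 <= t)%N ->
  omd_tilde a th l t.+1 = expstep (omd_tilde a th l t) (th t) (l t).
Proof. by case: t. Qed.

Lemma omd_inv (a : vec) th l t : simplex a ->
  simplex (omd_tilde a th l t) /\ sub a (omd_tilde a th l t).
Proof.
move=> sa; elim: t => [|t [IH1 IH2]] /=; first by split => //; exact: sub_refl.
case: eqP => _; first by split => //; exact: sub_refl.
split; first exact: expstep_simplex.
exact: sub_expstep.
Qed.

Lemma theta_pos (T : nat) (th : nat -> R) : 0 < th 1%N ->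
  (forall t, (1 <= t < T)%N -> th t <= th t.+1) ->
  forall t, (1 <= t <= T)%N -> 0 < th t.
Proof.
move=> t1 tm; elim=> [//|t IH] /andP[h1 h2].
case: t IH h1 h2 => [//|t] IH _ h2.
have h3 : (1 <= t.+1 <= T)%N by rewrite /= ltnW.
have h4 : (1 <= t.+1 < T)%N by [].
exact: lt_le_trans (IH h3) (tm _ h4).
Qed.

Lemma omd_decomp (T : nat) (a u : vec) th l : simplex a -> simplex u -> sub u a ->
  0 < th 1%N -> (forall t, (1 <= t < T)%N -> th t <= th t.+1) ->
  - ((th 1%N)^-1 * klr u a) <=
  \sum_(1 <= t < T.+1) (dotv (l t) u
      + ln (Zs (omd_tilde a th l t) (th t) (l t)) / th t).
Proof.
move=> sa su sua t1 tm.
have tp := theta_pos t1 tm.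
set wt := omd_tilde a th l.
have e : \sum_(1 <= t < T.+1) (dotv (l t) u + ln (Zs (wt t) (th t) (l t)) / th t)
    = \sum_(1 <= t < T.+1) (th t)^-1 * (klr u (wt t.+1) - klr u (wt t)).
  apply: eq_big_nat => t /andP[h1 h2].
  have [sw sw'] := omd_inv th l t sa.
  rewrite /wt omd_succ // gibbs //; last exact: sub_trans sua sw'.
  have := tp t; rewrite h1 /= -ltnS h2 => /(_ isT) tp'.
  rewrite dotvC; field; by rewrite gt_eqF.
rewrite e.
have -> : klr u a = klr u (wt 1%N) by [].
apply: tele.
- move=> t /andP[h1 h2].
  have ht : (1 <= t <= T)%N by rewrite h1 ltnW.
  have ht1 : (1 <= t.+1 <= T)%N by rewrite h2.
  rewrite lef_pV2 ?posrE ?tp //; apply: tm; by rewrite h1 h2.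
- by move=> t ht; rewrite invr_ge0 ltW // tp.
- by rewrite invr_ge0 ltW.
- move=> t; have [sw sw'] := omd_inv th l t sa.
  exact: klr_ge0 sw su (sub_trans sua sw').
Qed.

Definition Lc (l : nat -> vec) (t : nat) : vec := fun i => \sum_(1 <= s < t) l s i.

Lemma ftrlE (a : vec) eta l t : ftrl_tilde a eta l t = expstep a (eta t) (Lc l t).
Proof. by []. Qed.

Lemma Zs_step (a L x : vec) e : simplex a ->
  Zs (expstep a e L) e x = Zs a e (fun i => L i + x i) / Zs a e L.
Proof.
move=> sa; rewrite /Zs mulr_suml; apply: eq_bigr => i _.
by rewrite expstepE mulrDr opprD expRD; ring.
Qed.

Lemma Lc_succ l t : (1 <= t)%N -> Lc l t.+1 = fun i => Lc l t i + l t i.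
Proof. by move=> h; apply/funext => i; rewrite /Lc big_nat_recr. Qed.

Lemma gibbs_lb (a q L : vec) e : simplex a -> simplex q -> sub q a -> 0 < e ->
  - (ln (Zs a e L) / e) <= dotv q L + klr q a / e.
Proof.
move=> sa sq sqa e0.
have G := gibbs e L sa sq sqa.
have K := klr_ge0 (expstep_simplex e L sa) sq (sub_expstep e L sa sqa).
rewrite G in K.
have : 0 <= (klr q a + e * dotv q L + ln (Zs a e L)) / e by rewrite divr_ge0 // ltW.
have -> : (klr q a + e * dotv q L + ln (Zs a e L)) / e
   = klr q a / e + dotv q L + ln (Zs a e L) / e by field; rewrite gt_eqF.
lra.
Qed.

Lemma Pmono (a L : vec) e e' : simplex a -> 0 < e' -> e' <= e ->
  ln (Zs a e' L) / e' <= ln (Zs a e L) / e.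
Proof.
move=> sa e0 ee.
have e0' : 0 < e by apply: lt_le_trans e0 ee.
set q := expstep a e' L.
have sq : simplex q by exact: expstep_simplex.
have G := gibbs e' L sa sq (sub_expstep' sa).
rewrite klr_self in G.
have F := gibbs_lb L sa sq (sub_expstep' sa) e0'.
have K := klr_ge0 sa sq (sub_expstep' sa).
have h : klr q a / e <= klr q a / e'.
  by apply: ler_wpM2l => //; rewrite lef_pV2 ?posrE.
have -> : ln (Zs a e' L) / e' = - (dotv q L + klr q a / e').
  have -> : ln (Zs a e' L) = - (klr q a + e' * dotv q L) by lra.
  by field; rewrite gt_eqF.
lra.
Qed.

Lemma eta_pos (T : nat) (eta : nat -> R) :
  (forall t, (1 <= t <= T)%N -> eta t.+1 <= eta t) -> 0 < eta T.+1 ->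
  forall t, (1 <= t <= T.+1)%N -> 0 < eta t.
Proof.
move=> em e0.
have main : forall k t, (t + k = T.+1)%N -> (1 <= t)%N -> eta T.+1 <= eta t.
  elim=> [|k IH] t htk ht; first by rewrite addn0 in htk; rewrite htk.
  apply: le_trans (IH t.+1 _ isT) (em t _); first by rewrite addSnnS.
  by rewrite ht /= -ltnS -htk addnS ltnS leq_addr.
move=> t /andP[h1 h2]; apply: lt_le_trans e0 (main (T.+1 - t)%N t _ h1).
by rewrite subnKC.
Qed.

Lemma ftrl_decomp (T : nat) (a u : vec) eta l : simplex a -> simplex u -> sub u a ->
  (forall t, (1 <= t <= T)%N -> eta t.+1 <= eta t) -> 0 < eta T.+1 ->
  - ((eta T.+1)^-1 * klr u a) <=
  \sum_(1 <= t < T.+1) (dotv (l t) u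
      + ln (Zs (ftrl_tilde a eta l t) (eta t) (l t)) / eta t).
Proof.
move=> sa su sua em eT.
have ep := eta_pos em eT.
set G := fun t => ln (Zs a (eta t) (Lc l t)) / eta t.
have h1 : \sum_(1 <= t < T.+1) (dotv (l t) u + (G t.+1 - G t)) <=
    \sum_(1 <= t < T.+1) (dotv (l t) u
      + ln (Zs (ftrl_tilde a eta l t) (eta t) (l t)) / eta t).
  apply: ler_sum_nat => t /andP[t1 t2].
  have et : 0 < eta t by apply: ep; rewrite t1 /= ltnW.
  have et1 : 0 < eta t.+1 by apply: ep; rewrite /=.
  rewrite lerD2l ftrlE Zs_step // -Lc_succ //.
  have Z1 := Zs_gt0 (eta t) (Lc l t.+1) sa.
  have Z2 := Zs_gt0 (eta t) (Lc l t) sa.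
  rewrite ln_div ?posrE // mulrBl.
  have := Pmono (Lc l t.+1) sa et1 (em t _); rewrite t1 /= -ltnS t2 => /(_ isT).
  rewrite /G; lra.
apply: le_trans h1.
rewrite big_split /= telescope_sumr //.
have G1 : G 1%N = 0.
  rewrite /G /Lc /Zs.
  have -> : \sum_i a i * expR (- (eta 1%N * \sum_(1 <= s < 1) l s i)) = \sum_i a i.
    by apply: eq_bigr => i _; rewrite big_geq // mulr0 oppr0 expR0 mulr1.
  by rewrite (proj2 sa) ln1 mul0r.
have D : \sum_(1 <= t < T.+1) dotv (l t) u = dotv u (Lc l T.+1).
  rewrite /dotv /Lc.
  under [RHS]eq_bigr do rewrite mulr_sumr.
  rewrite exchange_big /=; apply: eq_bigr => t _; apply: eq_bigr => i _.
  by rewrite mulrC.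
rewrite G1 subr0 D.
have F := gibbs_lb (Lc l T.+1) sa su sua eT.
rewrite -/(G T.+1) in F.
have e' : klr u a / eta T.+1 = (eta T.+1)^-1 * klr u a by rewrite mulrC.
rewrite e' in F.
move: F; rewrite /G; lra.
Qed.

End Decomp.


Section Glue.
Variable R : realType.
Variable n : nat.
Local Notation vec := (vec R n).

Lemma regret_gen (T : nat) (c : R) (eta : nat -> R) (wt w l : nat -> vec) (u : vec)
  (b : nat -> R) :
  (forall t, (1 <= t <= T)%N ->
     dotv (l t) (w t) + ln (Zs (wt t) (eta t) (l t)) / eta t <= b t) ->
  - c <= \sum_(1 <= t < T.+1) (dotv (l t) u + ln (Zs (wt t) (eta t) (l t)) / eta t) ->
  \sum_(1 <= t < T.+1) dotv (l t) (vsub (w t) u) <= c + \sum_(1 <= t < T.+1) b t.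
Proof.
move=> hb hd.
have e : \sum_(1 <= t < T.+1) dotv (l t) (vsub (w t) u) =
   \sum_(1 <= t < T.+1) (dotv (l t) (w t) + ln (Zs (wt t) (eta t) (l t)) / eta t)
 - \sum_(1 <= t < T.+1) (dotv (l t) u + ln (Zs (wt t) (eta t) (l t)) / eta t).
  rewrite -sumrB; apply: eq_bigr => t _; rewrite dotv_subr; ring.
have h : \sum_(1 <= t < T.+1) (dotv (l t) (w t) + ln (Zs (wt t) (eta t) (l t)) / eta t)
    <= \sum_(1 <= t < T.+1) b t.
  by apply: ler_sum_nat => t ht; apply: hb.
rewrite e; lra.
Qed.

Lemma kl_fin (q p : vec) : sub q p -> kl q p = (klr q p)%:E.
Proof.
move=> sqp; rewrite /kl /klr -sumEFin; apply: eq_bigr => i _.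
have [->|q0] := eqVneq (q i) 0; first by rewrite mul0r.
by rewrite (negbTE (sqp i q0)).
Qed.

Lemma kl_inf (q p : vec) : ~ sub q p -> kl q p = +oo%E.
Proof.
move=> nsub.
have [i [qi pi]] : exists i, q i != 0 /\ p i = 0.
  apply: contra_notP nsub => hn j qj; apply/negP => /eqP pj; apply: hn; by exists j.
apply/eqP; rewrite /kl esum_eqy.
  apply/existsP; exists i => /=; by rewrite (negbTE qi) pi eqxx.
by move=> j _; case: ifP => // _; case: ifP.
Qed.

Lemma glue (T : nat) (phi : nat -> vec -> \bar R) (l w : nat -> vec) (u a : vec)
  (c : R) (B e : nat -> R) (w' wt : nat -> vec) :
  (forall t, (1 <= t <= T)%N -> exists g, subgrad (phi t) u g) ->
  (forall t, (1 <= t <= T)%N -> subgrad (phi t) (w t) (l t)) ->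
  0 < c ->
  (forall t, (1 <= t <= T)%N -> sub (w' t) (wt t)) ->
  (sub u a -> \sum_(1 <= t < T.+1) dotv (l t) (vsub (w t) u) <=
     c * klr u a + \sum_(1 <= t < T.+1) B t
     - \sum_(1 <= t < T.+1) e t * klr (w' t) (wt t)) ->
  (regret T phi w u <= c%:E * kl u a + \sum_(1 <= t < T.+1) (B t)%:E
      - \sum_(1 <= t < T.+1) (e t)%:E * kl (w' t) (wt t))%E.
Proof.
move=> hu hw c0 hs hreal.
have S2 : (\sum_(1 <= t < T.+1) (e t)%:E * kl (w' t) (wt t))%E
    = (\sum_(1 <= t < T.+1) e t * klr (w' t) (wt t))%:E.
  rewrite -sumEFin; apply: eq_big_nat => t ht; by rewrite kl_fin; [| exact: hs].
have S1 : (\sum_(1 <= t < T.+1) (B t)%:E)%E = (\sum_(1 <= t < T.+1) B t)%:E.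
  by rewrite sumEFin.
rewrite S1 S2.
case: (pselect (sub u a)) => sua; last first.
  rewrite kl_inf // gt0_muley; last exact: c0.
  by rewrite (@addye _ (_%:E)) // leey.
rewrite kl_fin //.
have Rw : (\sum_(1 <= t < T.+1) phi t (w t))%E
    = (\sum_(1 <= t < T.+1) fine (phi t (w t)))%:E.
  rewrite -sumEFin; apply: eq_big_nat => t ht; rewrite fineK //.
  by case: (hw t ht).
have Ru : (\sum_(1 <= t < T.+1) phi t u)%E
    = (\sum_(1 <= t < T.+1) fine (phi t u))%:E.
  rewrite -sumEFin; apply: eq_big_nat => t ht; rewrite fineK //.
  by case: (hu t ht) => g [].
suff H : \sum_(1 <= t < T.+1) fine (phi t (w t)) - \sum_(1 <= t < T.+1) fine (phi t u)
   <= c * klr u a + \sum_(1 <= t < T.+1) B t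
      - \sum_(1 <= t < T.+1) e t * klr (w' t) (wt t).
  by rewrite /regret Rw Ru; exact: H.
apply: le_trans (hreal sua).
rewrite -sumrB; apply: ler_sum_nat => t ht.
have [fw hsg] := hw t ht.
have [g [fu _]] := hu t ht.
have := hsg u; rewrite -(fineK fw) -(fineK fu) -EFinD lee_fin.
rewrite dotv_subr [dotv (l t) (vsub (w t) u)]dotv_subr.
lra.
Qed.

End Glue.


Section Real.
Variable R : realType.
Variable n : nat.
Local Notation vec := (vec R n).

Lemma real_gen (T : nat) (cK : R) (eta : nat -> R) (wt w w' l : nat -> vec) (u : vec)
  (Bq : nat -> R) :
  (forall t, (1 <= t <= T)%N -> 0 < eta t) ->
  (forall t, (1 <= t <= T)%N ->
     eta t * dotv (l t) (w t) + ln (Zs (wt t) (eta t) (l t)) <= Bq t - klr (w' t) (wt t)) ->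
  - cK <= \sum_(1 <= t < T.+1) (dotv (l t) u + ln (Zs (wt t) (eta t) (l t)) / eta t) ->
  \sum_(1 <= t < T.+1) dotv (l t) (vsub (w t) u) <=
    cK + \sum_(1 <= t < T.+1) (eta t)^-1 * Bq t
    - \sum_(1 <= t < T.+1) (eta t)^-1 * klr (w' t) (wt t).
Proof.
move=> ep hs hd.
have := regret_gen (b := fun t => (eta t)^-1 * Bq t - (eta t)^-1 * klr (w' t) (wt t)) _ hd.
rewrite sumrB addrA; apply => t ht.
rewrite -mulrBr; exact: conv (ep t ht) (hs t ht).
Qed.

End Real.

Theorem corollary4 (R : realType) (n T : nat)
  (phi : nat -> vec R n -> \bar R) (l lh : nat -> vec R n) (a u : vec R n) :
  (forall t, (1 <= t <= T)%N -> proper_fun (phi t)) ->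
  (forall t, (1 <= t <= T)%N -> forall w, simplex w -> exists g, subgrad (phi t) w g) ->
  simplex a -> simplex u ->
  (* (i) *)
  (forall eta : nat -> R,
    (forall t, (1 <= t <= T)%N -> eta t.+1 <= eta t) -> 0 < eta T.+1 ->
    let wt := ftrl_tilde a eta l in
    let w := fun t => expstep (wt t) (eta t) (lh t) in
    let v := fun t => expstep (wt t) (eta t) (lhat' (l t) (lh t)) in
    (forall t, (1 <= t <= T)%N -> subgrad (phi t) (w t) (l t)) ->
    (regret T phi w u <=
       (eta T.+1)^-1%:E * kl u a
       + \sum_(1 <= t < T.+1)
           ((eta t)^-1 * Qstar 2 (eta t * supnorm (vsub (l t) (lh t))))%:E
       - \sum_(1 <= t < T.+1) (eta t)^-1%:E * kl (w t) (wt t))%E /\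
    (regret T phi w u <=
       (eta T.+1)^-1%:E * kl u a
       + \sum_(1 <= t < T.+1) ((eta t)^-1 * Phix (eta t) (l t) (lh t))%:E
       - \sum_(1 <= t < T.+1) (eta t)^-1%:E * kl (v t) (wt t))%E) /\
  (* (ii) *)
  (forall theta : nat -> R,
    0 < theta 1%N -> (forall t, (1 <= t < T)%N -> theta t <= theta t.+1) ->
    let wt := omd_tilde a theta l in
    let w := fun t => expstep (wt t) (theta t) (lh t) in
    let v := fun t => expstep (wt t) (theta t) (lhat' (l t) (lh t)) in
    (forall t, (1 <= t <= T)%N -> subgrad (phi t) (w t) (l t)) ->
    (regret T phi w u <=
       (theta 1%N)^-1%:E * kl u a
       + \sum_(1 <= t < T.+1)
           ((theta t)^-1 * Qstar 2 (theta t * supnorm (vsub (l t) (lh t))))%:E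
       - \sum_(1 <= t < T.+1) (theta t)^-1%:E * kl (w t) (wt t))%E /\
    (regret T phi w u <=
       (theta 1%N)^-1%:E * kl u a
       + \sum_(1 <= t < T.+1) ((theta t)^-1 * Phix (theta t) (l t) (lh t))%:E
       - \sum_(1 <= t < T.+1) (theta t)^-1%:E * kl (v t) (wt t))%E).
Proof.
move=> Hprop Hsub sa su.
have hu : forall t, (1 <= t <= T)%N -> exists g, subgrad (phi t) u g.
  by move=> t ht; exact: Hsub t ht u su.
split.
- move=> eta em eT wt w v Hsg.
  have ep := eta_pos em eT.
  have ept : forall t, (1 <= t <= T)%N -> 0 < eta t.
    by move=> t /andP[h1 h2]; apply: ep; rewrite h1 /= ltnW.
  have swt : forall t, simplex (wt t).
    by move=> t; rewrite /wt ftrlE; exact: expstep_simplex.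
  have c0 : 0 < (eta T.+1)^-1 by rewrite invr_gt0.
  split.
  + apply: glue hu Hsg c0 _ _.
      by move=> t _; exact: sub_expstep' (swt t).
    move=> sua; apply: real_gen => [t ht|t ht|].
    * exact: ept t ht.
    * exact: stab1 (swt t) (ept t ht).
    * exact: ftrl_decomp sa su sua em eT.
  + apply: glue hu Hsg c0 _ _.
      by move=> t _; exact: sub_expstep' (swt t).
    move=> sua; apply: real_gen => [t ht|t ht|].
    * exact: ept t ht.
    * exact: stab2 (swt t) (ept t ht).
    * exact: ftrl_decomp sa su sua em eT.
- move=> th t1 tm wt w v Hsg.
  have ept := theta_pos t1 tm.
  have swt : forall t, simplex (wt t).
    by move=> t; have [] := omd_inv th l t sa.
  have c0 : 0 < (th 1%N)^-1 by rewrite invr_gt0.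
  split.
  + apply: glue hu Hsg c0 _ _.
      by move=> t _; exact: sub_expstep' (swt t).
    move=> sua; apply: real_gen => [t ht|t ht|].
    * exact: ept t ht.
    * exact: stab1 (swt t) (ept t ht).
    * exact: omd_decomp sa su sua t1 tm.
  + apply: glue hu Hsg c0 _ _.
      by move=> t _; exact: sub_expstep' (swt t).
    move=> sua; apply: real_gen => [t ht|t ht|].
    * exact: ept t ht.
    * exact: stab2 (swt t) (ept t ht).
    * exact: omd_decomp sa su sua t1 tm.
Qed.
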